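(* Let $d\geq 2$ and $n\geq 1$ be integers, let $k$ be an integer with $0\leq k\leq\lfloor\log_d n\rfloor$, and let $\mathbf d=(1,d,d^2,\ldots,d^k)$. Let $\mathbf p_{\mathbf d,d}(n)$ denote the number of integer tuples $(x_0,\ldots,x_k)$ with $\sum_{i=0}^k d^ix_i=n$, $x_i\geq 0$ and $x_i\equiv 0$ or $x_i\equiv 1\pmod d$ for all $i$. Then $$\mathbf p_{\mathbf d,d}(n)=\frac{1}{k!}\sum_{\substack{\varepsilon\in\{0,1\}^{k+1},\ 0\leq j_i\leq d^{k-i}-1,\ 0\leq i\leq k-1\\ \sum_{i=0}^{k-1}d^{i+1}j_i+\sum_{i=0}^k d^i\varepsilon_i\equiv n\pmod{d^{k+1}}}}\ \prod_{\ell=1}^{k}\left(\frac{n-\sum_{i=0}^{k-1}d^{i+1}j_i-\sum_{i=0}^k d^i\varepsilon_i}{d^{k+1}}+\ell\right),$$ where $\varepsilon=(\varepsilon_0,\ldots,\varepsilon_k)$. Moreover, the polynomial part of $\mathbf p_{\mathbf d,d}$ is $$P_{\mathbf d,d}(n)=\frac{1}{k!\,d^{k+1}}\sum_{\varepsilon\in\{0,1\}^{k+1},\ 0\leq j_i\leq d^{k-i}-1,\ 0\leq i\leq k-1}\ \prod_{\ell=1}^{k}\left(\frac{n-\sum_{i=0}^{k-1}d^{i+1}j_i-\sum_{i=0}^k d^i\varepsilon_i}{d^{k+1}}+\ell\right).$$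
   Context: The polynomial part $P_{\mathbf d,d}(n)$ of $\mathbf p_{\mathbf d,d}$ is the polynomial in $n$ given by the coefficient of $t^{-1}$ in the Laurent expansion at $t=0$ of $e^{nt}\prod_{i=0}^k\dfrac{1+e^{-d^it}}{1-e^{-d^{i+1}t}}$. *)

(* Defs.v *)
From HB Require Import structures.
From mathcomp Require Import all_boot all_order all_algebra.
Set Implicit Arguments. Unset Strict Implicit. Unset Printing Implicit Defensive.
Import Order.TTheory GRing.Theory Num.Theory.
Local Open Scope ring_scope.

Section FPS.
Variable R : fieldType.

(* sum_m a m t^m is represented by a : nat -> R *)
Definition fps_one : nat -> R := fun m => (m == 0%N)%:R.
Definition fps_add (a b : nat -> R) : nat -> R := fun m => a m + b m.
Definition fps_sub (a b : nat -> R) : nat -> R := fun m => a m - b m.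
Definition fps_mul (a b : nat -> R) : nat -> R :=
  fun m => \sum_(i < m.+1) a i * b (m - i)%N.
Definition fps_exp (c : R) : nat -> R := fun m => c ^+ m / (m`!)%:R.

Fixpoint fps_inv_seq (a : nat -> R) (m : nat) : seq R :=
  match m with
  | 0%N => [:: (a 0%N)^-1]
  | m'.+1 => let s := fps_inv_seq a m' in
      rcons s (- (a 0%N)^-1 * \sum_(i < m'.+1) a i.+1 * nth 0 s (m' - i)%N)
  end.
Definition fps_inv (a : nat -> R) : nat -> R := fun m => nth 0 (fps_inv_seq a m) m.

(* Laurent expansion at t = 0 of N(t)/D(t), where D(t) = t^v * D'(t) with
   D'(0) != 0 (i.e. D has order v): the coefficient of t^e is the coefficient
   of t^(e+v) in the power series N * D'^{-1}. *)
Definition laurent_coef (N D : nat -> R) (v : nat) (e : int) : R :=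
  match (e + v%:Z)%R with
  | Posz m => fps_mul N (fps_inv (fun j => D (j + v)%N)) m
  | Negz _ => 0
  end.
End FPS.

(* p_{d,d}(n) for the vector (1,d,...,d^k): number of (x_0,...,x_k) in N^{k+1}
   with sum_i d^i x_i = n and x_i = 0 or 1 mod d.  Every solution satisfies
   x_i <= n, so we count in {0..n}^{k+1}. *)
Definition pdd (d k n : nat) : nat :=
  #|[set x : {ffun 'I_k.+1 -> 'I_n.+1} |
      ((\sum_(i < k.+1) d ^ i * x i)%N == n) &&
      [forall i, (x i %% d == 0)%N || (x i %% d == 1)%N]]|.

(* P_{d,d}(x): coefficient of t^{-1} in the Laurent expansion at 0 of
   e^{x t} prod_{i=0}^k (1 + e^{-d^i t}) / (1 - e^{-d^{i+1} t}).
   The denominator prod_i (1 - e^{-d^{i+1} t}) has order exactly k+1 at 0. *)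
Definition ppart_num (d k : nat) (x : rat) : nat -> rat :=
  fps_mul (fps_exp x)
    (\big[@fps_mul _/@fps_one _]_(i < k.+1)
        fps_add (@fps_one _) (fps_exp (- (d ^ i)%:R))).
Definition ppart_den (d k : nat) : nat -> rat :=
  \big[@fps_mul _/@fps_one _]_(i < k.+1)
     fps_sub (@fps_one _) (fps_exp (- (d ^ i.+1)%:R)).
Definition polypart (d k : nat) (x : rat) : rat :=
  laurent_coef (ppart_num d k x) (ppart_den d k) k.+1 (-1).

Definition shiftS (d k : nat) (eps : {ffun 'I_k.+1 -> bool}) (j : {ffun 'I_k -> 'I_(d ^ k)}) : nat :=
  (\sum_(i < k) d ^ i.+1 * j i + \sum_(i < k.+1) d ^ i * eps i)%N.

Definition prodterm (d k : nat) (x : rat) (S : nat) : rat :=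
  \prod_(1 <= l < k.+1) ((x - S%:R) / (d ^ k.+1)%:R + l%:R).

Definition jadm (d k : nat) (j : {ffun 'I_k -> 'I_(d ^ k)}) : bool :=
  [forall i : 'I_k, (j i < d ^ (k - i))%N].

(* Main.v *)
Require Import Defs.
From HB Require Import structures.
From mathcomp Require Import all_boot all_order all_algebra.
From mathcomp Require Import ring lra zify.
Unset Printing Implicit Defensive.
Import Order.TTheory GRing.Theory Num.Theory.
Local Open Scope ring_scope.


Definition eqm (L : nat) (p q : {poly rat}) := forall i, (i < L)%N -> p`_i = q`_i.

Lemma eqm_refl L p : eqm L p p. Proof. by []. Qed.
Lemma eqm_sym L p q : eqm L p q -> eqm L q p. Proof. by move=> h i hi; rewrite h. Qed.
Lemma eqm_trans L p q r : eqm L p q -> eqm L q r -> eqm L p r.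
Proof. by move=> h1 h2 i hi; rewrite h1 // h2. Qed.
Lemma eqm_le L L' p q : (L' <= L)%N -> eqm L p q -> eqm L' p q.
Proof. by move=> hl h i hi; apply: h; apply: leq_trans hl. Qed.
Lemma eqmD L p q p' q' : eqm L p q -> eqm L p' q' -> eqm L (p + p') (q + q').
Proof. by move=> h1 h2 i hi; rewrite !coefD h1 // h2. Qed.
Lemma eqmN L p q : eqm L p q -> eqm L (- p) (- q).
Proof. by move=> h1 i hi; rewrite !coefN h1. Qed.
Lemma eqmB L p q p' q' : eqm L p q -> eqm L p' q' -> eqm L (p - p') (q - q').
Proof. by move=> h1 h2; apply: eqmD => //; apply: eqmN. Qed.
Lemma eqmM L p q p' q' : eqm L p q -> eqm L p' q' -> eqm L (p * p') (q * q').
Proof.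
move=> h1 h2 i hi; rewrite !coefM; apply: eq_bigr => j _.
have hj : (j < L)%N by apply: leq_ltn_trans hi; rewrite -ltnS.
rewrite h1 // h2 //; apply: leq_ltn_trans hi; exact: leq_subr.
Qed.
Lemma eqmMl L r p q : eqm L p q -> eqm L (r * p) (r * q).
Proof. by apply: eqmM. Qed.
Lemma eqmMr L r p q : eqm L p q -> eqm L (p * r) (q * r).
Proof. by move=> h; apply: eqmM. Qed.
Lemma eqmX L p q n : eqm L p q -> eqm L (p ^+ n) (q ^+ n).
Proof. by move=> h; elim: n => [|n IH]; rewrite ?expr0 // !exprS; apply: eqmM. Qed.
Lemma eqm_eq L p q : p = q -> eqm L p q. Proof. by move->. Qed.
Lemma eqm_prod L I (r : seq I) (P : pred I) (F G : I -> {poly rat}) :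
  (forall i, P i -> eqm L (F i) (G i)) ->
  eqm L (\prod_(i <- r | P i) F i) (\prod_(i <- r | P i) G i).
Proof.
move=> h; elim: r => [|a r IH]; first by rewrite !big_nil.
rewrite !big_cons; case: (P a) (h a) => // ha; exact: eqmM (ha erefl) IH.
Qed.
Lemma eqm_sum L I (r : seq I) (P : pred I) (F G : I -> {poly rat}) :
  (forall i, P i -> eqm L (F i) (G i)) ->
  eqm L (\sum_(i <- r | P i) F i) (\sum_(i <- r | P i) G i).
Proof.
move=> h; elim: r => [|a r IH]; first by rewrite !big_nil.
rewrite !big_cons; case: (P a) (h a) => // ha; exact: eqmD (ha erefl) IH.
Qed.
Lemma eqm_shift L s p q : eqm (L + s) ('X^s * p) ('X^s * q) -> eqm L p q.
Proof.
move=> h i hi; have := h (i + s)%N; rewrite !coefXnM.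
have -> : (i + s < s)%N = false by apply/negbTE; rewrite -leqNgt leq_addl.
by rewrite addnK; apply; rewrite ltn_add2r.
Qed.
Lemma eqm_deriv L p q : eqm L.+1 p q -> eqm L p^`() q^`().
Proof. by move=> h i hi; rewrite !coef_deriv h. Qed.

Definition P (L : nat) (a : nat -> rat) : {poly rat} := \poly_(i < L) a i.

Lemma coefP L a i : (i < L)%N -> (P L a)`_i = a i.
Proof. by move=> h; rewrite coef_poly h. Qed.

Lemma fps_mulE L a b m : (m < L)%N -> fps_mul a b m = (P L a * P L b)`_m.
Proof.
move=> hm; rewrite coefM /fps_mul; apply: eq_bigr => j _.
by rewrite !coefP //; move: (ltn_ord j) hm; lia.
Qed.

Lemma P_mul L a b : eqm L (P L (fps_mul a b)) (P L a * P L b).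
Proof. by move=> i hi; rewrite coefP // (fps_mulE _ _ _ _ hi). Qed.
Lemma P_add L a b : P L (fps_add a b) = P L a + P L b.
Proof. by apply/polyP => i; rewrite coefD !coef_poly; case: ifP; rewrite ?addr0. Qed.
Lemma P_sub L a b : P L (fps_sub a b) = P L a - P L b.
Proof. by apply/polyP => i; rewrite coefB !coef_poly; case: ifP; rewrite ?subr0. Qed.
Lemma P_one L : (0 < L)%N -> P L (@fps_one _) = 1.
Proof.
by move=> hL; apply/polyP => i; rewrite coef1 coef_poly /fps_one; case: ifP => // /negbT; rewrite -leqNgt; case: i => // /(leq_trans hL).
Qed.
Lemma P_eqm L L' a : (L <= L')%N -> eqm L (P L a) (P L' a).
Proof. by move=> h i hi; rewrite !coefP //; apply: leq_trans h. Qed.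

Lemma P_prod L n (F : 'I_n -> nat -> rat) : (0 < L)%N ->
  eqm L (P L (\big[@fps_mul _/@fps_one _]_(i < n) F i)) (\prod_(i < n) P L (F i)).
Proof.
move=> hL; elim: n F => [|n IH] F; first by rewrite !big_ord0 P_one.
rewrite !big_ord_recl; apply: eqm_trans (P_mul _ _ _) _; apply: eqmM => //.
Qed.


Lemma size_inv_seq (a : nat -> rat) m : size (fps_inv_seq a m) = m.+1.
Proof. by elim: m => [|m IH] //=; rewrite size_rcons IH. Qed.

Lemma inv_seq_prefix (a : nat -> rat) m i : (i <= m)%N ->
  nth 0 (fps_inv_seq a m) i = fps_inv a i.
Proof.
elim: m => [|m IH]; first by rewrite leqn0 => /eqP ->.
rewrite leq_eqVlt => /orP [/eqP -> //| hi].
by rewrite /= nth_rcons size_inv_seq hi IH.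
Qed.

Lemma fps_inv_ok (a : nat -> rat) : a 0%N != 0 ->
  forall m, fps_mul a (fps_inv a) m = (m == 0%N)%:R.
Proof.
move=> a0 [|m].
  by rewrite /fps_mul big_ord1 /fps_inv /= mulfV.
rewrite /fps_mul big_ord_recl /= subn0.
have -> : fps_inv a m.+1 = - (a 0%N)^-1 * \sum_(i < m.+1) a i.+1 * fps_inv a (m - i)%N.
  rewrite /fps_inv /= nth_rcons size_inv_seq ltnn eqxx; congr (_ * _).
  by apply: eq_bigr => i _; rewrite inv_seq_prefix // leq_subr.
rewrite mulrA mulrN mulfV // mulN1r.
have -> : \sum_(i < m.+1) a (bump 0 i) * fps_inv a (m.+1 - bump 0 i)%N
   = \sum_(i < m.+1) a i.+1 * fps_inv a (m - i)%N by [].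
by rewrite addNr.
Qed.

Lemma P_inv L (a : nat -> rat) : a 0%N != 0 -> eqm L (P L a * P L (fps_inv a)) 1.
Proof.
move=> a0 i hi; rewrite -(fps_mulE _ _ _ _ hi) fps_inv_ok // coef1 //.
Qed.

Definition e (L : nat) (c : rat) := P L (fps_exp c).

Lemma fact_neq0 m : ((m`!)%:R : rat) != 0.
Proof. by rewrite pnatr_eq0 -lt0n fact_gt0. Qed.

Lemma fps_exp_add (a b : rat) m :
  fps_mul (fps_exp a) (fps_exp b) m = fps_exp (a + b) m.
Proof.
rewrite /fps_mul /fps_exp addrC exprDn mulr_suml; apply: eq_bigr => i _.
have hi : (i <= m)%N by rewrite -ltnS.
have := bin_fact hi => /(congr1 (fun z => z%:R : rat)); rewrite !natrM => hf.
rewrite -mulr_natr -hf.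
have h1 := fact_neq0 i; have h2 := fact_neq0 (m - i).
have h3 : ('C(m, i)%:R : rat) != 0 by rewrite pnatr_eq0 -lt0n bin_gt0.
field; by rewrite h1 h2 h3.
Qed.

Lemma e_add L a b : eqm L (e L a * e L b) (e L (a + b)).
Proof. by move=> i hi; rewrite -(fps_mulE _ _ _ _ hi) fps_exp_add coefP. Qed.

Lemma e0 L : (0 < L)%N -> e L 0 = 1.
Proof.
move=> hL; apply/polyP => i; rewrite coef1 coef_poly /fps_exp expr0n.
case: i => [|i]; first by rewrite hL /= divr1.
by case: ifP; rewrite // mul0r.
Qed.

Lemma e_sum L (I : Type) (r : seq I) (c : I -> rat) : (0 < L)%N ->
  eqm L (\prod_(i <- r) e L (c i)) (e L (\sum_(i <- r) c i)).
Proof.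
move=> hL; elim: r => [|x r IH]; first by rewrite !big_nil e0.
rewrite !big_cons; apply: eqm_trans (e_add _ _ _); exact: eqmMl.
Qed.


Lemma alg1 (R : comRingType) (X y E I J C V N : R) : X*(y*E)*(I*J) + E*(-(C - V - C*X*V)*(I*(I*1)))*(J*N) = y*X*E*(I*J) - N*C*E*(I*(I*J)) + N*E*(V*I)*(I*J) + N*C*X*E*(V*I)*(I*J). Proof. ring. Qed.

Lemma alg0 (R : comRingType) (X E' J1 E Ip J : R) n : X * (E' * J1 + E * (Ip * J *+ n)) = X*E'*J1 + E*(X*Ip)*J *+ n.
Proof. rewrite -!mulrnAr; ring. Qed.
Lemma alg2 (R : comRingType) (X V' I : R) : X * (- V' * I ^+ 2) = - (X * V') * I ^+ 2.
Proof. ring. Qed.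

Lemma alg3 (R : comRingType) (Fk N y H0 H1 c : R) :
  Fk * N = y*H0 - N*c*H1 + N*Fk + N*c*H0 -> N*c*H1 = (y+N*c)*H0.
Proof.
move=> h; transitivity (N*c*H1 - (Fk*N - (y*H0 - N*c*H1 + N*Fk + N*c*H0))).
  by rewrite h subrr subr0.
ring.
Qed.

Section Residue.
Variable c : rat.
Hypothesis c0 : c != 0.
Variable L1 : nat.
Hypothesis hL1 : (0 < L1)%N.
Let Lb := L1.+1.

Definition vfun : nat -> rat := fun i => - (-c) ^+ i.+1 / (i.+1)`!%:R.
Let V := P Lb vfun.
Let I := P Lb (fps_inv vfun).

Lemma e_coef0 L y : (0 < L)%N -> (e L y)`_0 = 1.
Proof. by move=> h; rewrite /e coefP // /fps_exp expr0 divr1. Qed.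

Lemma V1 : eqm Lb ('X * V) (1 - e Lb (-c)).
Proof.
move=> [|i] hi; first by rewrite coefXM coefB coef1 e_coef0 // subrr.
rewrite coefXM coefB coef1 /= /V /e !coefP //; last by apply: ltnW.
by rewrite /vfun /fps_exp sub0r mulNr.
Qed.

Lemma V2 : eqm Lb (V * I) 1.
Proof. apply: P_inv; by rewrite /vfun expr1 opprK factS fact0 muln1 divr1. Qed.

Lemma E'_ y : eqm L1 (e Lb y)^`() (y%:P * e Lb y).
Proof.
move=> i hi; rewrite coef_deriv coefCM /e !coefP //; last by apply: ltnW.
rewrite /fps_exp factS natrM exprS -mulr_natr.
have h1 := fact_neq0 i; have h2 : (i.+1%:R : rat) != 0 by rewrite pnatr_eq0.
rewrite -mulr_natr; field; by rewrite h1 /= addrC natr1.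
Qed.

Lemma Ider : eqm L1 I^`() (- V^`() * I ^+ 2).
Proof.
have h1 : eqm L1 (V^`() * I + V * I^`()) 0.
  rewrite -derivM -(derivC (1 : rat)) polyC1; apply: eqm_deriv; exact: V2.
have h2 : eqm L1 (V * I) 1 by apply: eqm_le V2.
apply: (@eqm_trans _ _ (I^`() * (V * I) - I * (V^`() * I + V * I^`()))).
  apply: eqm_sym; apply: (@eqm_trans _ _ (I^`() * 1 - I * 0)).
    by apply: eqmB; apply: eqmMl.
  by rewrite mulr1 mulr0 subr0.
by apply: eqm_eq; ring.
Qed.

Lemma Vder : eqm L1 ('X * V^`()) (c%:P - V - c%:P * 'X * V).
Proof.
have h1 : eqm L1 (V + 'X * V^`()) (c%:P * e Lb (-c)).
  have -> : V + 'X * V^`() = ('X * V)^`() by rewrite derivM derivX mul1r.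
  apply: (@eqm_trans _ _ (1 - e Lb (-c))^`()); first by apply: eqm_deriv; exact: V1.
  have d1 : (1 : {poly rat})^`() = 0 by rewrite -polyC1 derivC.
  rewrite derivB d1 sub0r.
  apply: (@eqm_trans _ _ (- ((-c)%:P * e Lb (-c)))); first by apply: eqmN; apply: E'_.
  by apply: eqm_eq; rewrite polyCN mulNr opprK.
have h2 : eqm L1 (e Lb (-c)) (1 - 'X * V).
  apply: eqm_le (leqnSn _) _; apply: (@eqm_trans _ _ (1 - (1 - e Lb (-c)))).
    by apply: eqm_eq; ring.
  by apply: eqmB => //; apply: eqm_sym; exact: V1.
apply: (@eqm_trans _ _ ((V + 'X * V^`()) - V)); first by apply: eqm_eq; ring.
apply: (@eqm_trans _ _ (c%:P * (1 - 'X * V) - V)); last by apply: eqm_eq; ring.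
apply: eqmB => //; apply: eqm_trans h1 _; exact: eqmMl.
Qed.

Definition h (k : nat) (y : rat) := (e Lb y * I ^+ k.+1)`_k.

Lemma h0 y : h 0 y = c^-1.
Proof.
rewrite /h expr1 coef0M e_coef0 // mul1r /I coefP // /fps_inv /=.
by rewrite /vfun expr1 opprK factS fact0 muln1 divr1.
Qed.

Lemma hS k y : (k.+1 < L1)%N ->
  (k.+1)%:R * c * h k.+1 y = (y + (k.+1)%:R * c) * h k y.
Proof.
move=> hk.
set E := e Lb y.
set F := E * I ^+ k.+1.
have hVI : eqm L1 (V * I) 1 by apply: eqm_le V2.
have hF : eqm L1 ('X * F^`())
   (y%:P * 'X * E * I ^+ k.+1 - (k.+1%:R * c)%:P * E * I ^+ k.+2
     + k.+1%:R%:P * E * I ^+ k.+1 + (k.+1%:R * c)%:P * 'X * E * I ^+ k.+1).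
  rewrite /F derivM deriv_exp succnK.
  apply: (@eqm_trans _ _ ('X * (y%:P * E) * I ^+ k.+1
            + E * (- ('X * V^`()) * I ^+ 2) * I ^+ k *+ k.+1)).
    have -> : 'X * (E^`() * I ^+ k.+1 + E * (I^`() * I ^+ k *+ k.+1))
       = 'X * E^`() * I ^+ k.+1 + E * ('X * I^`()) * I ^+ k *+ k.+1.
      by apply: alg0.
    apply: eqmD; first by apply: eqmMr; apply: eqmMl; apply: E'_.
    rewrite -!mulrnAr; apply: eqmMr; apply: eqmMl.
    apply: (@eqm_trans _ _ ('X * (- V^`() * I ^+ 2))); first by apply: eqmMl; exact: Ider.
    by apply: eqm_eq; apply: alg2.
  apply: (@eqm_trans _ _ ('X * (y%:P * E) * I ^+ k.+1
            + E * (- (c%:P - V - c%:P * 'X * V) * I ^+ 2) * I ^+ k *+ k.+1)).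
    apply: eqmD => //; rewrite -!mulrnAr; apply: eqmMr; apply: eqmMl.
    apply: eqmMr; apply: eqmN; exact: Vder.
  apply: (@eqm_trans _ _ (y%:P * 'X * E * I ^+ k.+1 - (k.+1%:R * c)%:P * E * I ^+ k.+2
     + k.+1%:R%:P * E * (V * I) * I ^+ k.+1 + (k.+1%:R * c)%:P * 'X * E * (V * I) * I ^+ k.+1)).
    apply: eqm_eq; rewrite !polyCM -!mulrnAr !exprS expr0 -mulr_natr polyC_natr; apply: alg1.
  have hA : forall A, eqm L1 (A * (V * I) * I ^+ k.+1) (A * I ^+ k.+1).
    move=> A; apply: eqmMr; rewrite -[X in eqm _ _ X]mulr1; exact: eqmMl.
  apply: eqmD; last exact: hA.
  apply: eqmD; last exact: hA.
  exact: eqm_refl.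
have := hF k.+1 hk.
rewrite coefXM coef_deriv /= !coefD !coefN -!mulrA !coefCM !coefXM /= /h -/F.
rewrite -/E mulrA -[F`_k.+1 *+ k.+1]mulr_natr; exact: alg3.
Qed.
End Residue.


Lemma h_closed c (c0 : c != 0) L1 k y : (k < L1)%N ->
  h c L1 k y = ((k`!)%:R * c)^-1 * \prod_(1 <= l < k.+1) (y / c + l%:R).
Proof.
elim: k => [|k IH] hk.
  by rewrite h0 // big_geq // fact0 mul1r mulr1.
have e1 := hS c c0 L1 k y hk.
have hk1 : ((k.+1)%:R : rat) != 0 by rewrite pnatr_eq0.
rewrite big_nat_recr //=; apply: (mulfI (mulf_neq0 hk1 c0)).
rewrite mulrA e1 (IH (ltnW hk)) factS natrM.
have hf := fact_neq0 k.
field; by rewrite c0 hf /= addrC natr1.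
Qed.


Lemma prod_if (R : comRingType) (I : finType) (Pr : pred I) (F : I -> R) :
  \prod_i (if Pr i then F i else 0) = if [forall i, Pr i] then \prod_i F i else 0.
Proof.
case: (boolP [forall i, Pr i]) => [/forallP h | ].
  by apply: eq_bigr => i _; rewrite h.
rewrite negb_forall => /existsP [i hi].
by rewrite (bigD1 i) //= (negbTE hi) mul0r.
Qed.

Lemma expand (R : comRingType) (f : nat -> R) d k : (0 < d)%N ->
  \prod_(i < k.+1) (f 0%N + f (d ^ i)%N) *
  \prod_(i < k) (\sum_(j < d ^ (k - i)) f (d ^ i.+1 * j)%N) =
  \sum_(eps : {ffun 'I_k.+1 -> bool}) \sum_(j : {ffun 'I_k -> 'I_(d ^ k)} | jadm j)
     (\prod_(i < k.+1) f (d ^ i * eps i)%N) * \prod_(i < k) f (d ^ i.+1 * j i)%N.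
Proof.
move=> hd.
have e1 : \prod_(i < k.+1) (f 0%N + f (d ^ i)%N) =
   \sum_(eps : {ffun 'I_k.+1 -> bool}) \prod_(i < k.+1) f (d ^ i * eps i)%N.
  rewrite (eq_bigr (fun i : 'I_k.+1 => \sum_(b : bool) f (d ^ i * b)%N)); last first.
    by move=> i _; rewrite big_bool /= muln1 muln0 addrC.
  by rewrite bigA_distr_bigA.
have e2 : \prod_(i < k) (\sum_(j < d ^ (k - i)) f (d ^ i.+1 * j)%N) =
   \sum_(j : {ffun 'I_k -> 'I_(d ^ k)} | jadm j) \prod_(i < k) f (d ^ i.+1 * j i)%N.
  have -> : \prod_(i < k) (\sum_(j < d ^ (k - i)) f (d ^ i.+1 * j)%N) =
     \prod_(i < k) (\sum_(j : 'I_(d ^ k)) if (j < d ^ (k - i))%N then f (d ^ i.+1 * j)%N else 0).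
    apply: eq_bigr => i _.
    rewrite (big_ord_widen (d ^ k) (fun j => f (d ^ i.+1 * j)%N)); last first.
      by apply: leq_pexp2l => //; apply: leq_subr.
    by rewrite big_mkcond.
  rewrite bigA_distr_bigA [RHS]big_mkcond; apply: eq_bigr => j _.
  by rewrite prod_if.
by rewrite e1 e2 big_distrl; apply: eq_bigr => eps _; rewrite big_distrr.
Qed.

Lemma shift_bound d k (eps : {ffun 'I_k.+1 -> bool}) (j : {ffun 'I_k -> 'I_(d ^ k)}) :
  (0 < d)%N -> jadm j -> (shiftS eps j <= k * d ^ k.+1 + 1)%N.
Proof.
move=> hd /forallP hj.
have b1 : (\sum_(i < k) d ^ i.+1 * j i + \sum_(i < k) d ^ i.+1 <= k * d ^ k.+1)%N.
  rewrite -big_split /=.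
  have -> : (k * d ^ k.+1 = \sum_(i < k) d ^ k.+1)%N by rewrite sum_nat_const card_ord.
  apply: leq_sum => i _; rewrite -[X in (_ + X <= _)%N]muln1 -mulnDr addn1.
  have -> : (d ^ k.+1 = d ^ i.+1 * d ^ (k - i))%N.
    by rewrite -expnD; congr (expn _ _); move: (ltn_ord i); lia.
  by rewrite leq_mul2l hj orbT.
have b2 : (\sum_(i < k.+1) d ^ i * eps i <= 1 + \sum_(i < k) d ^ i.+1)%N.
  rewrite big_ord_recl /= expn0 mul1n.
  apply: leq_add; first by case: (eps ord0).
  apply: leq_sum => i _; rewrite /bump /=; case: (eps _); rewrite ?muln1 ?muln0 //.
rewrite /shiftS; move: b1 b2; lia.
Qed.


Lemma coef0X (p : {poly rat}) n : (p ^+ n)`_0 = p`_0 ^+ n.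
Proof. elim: n => [|n IH]; first by rewrite !expr0 coef1. by rewrite !exprS coef0M IH. Qed.

Lemma tele L (c : rat) r : (0 < L)%N ->
  eqm L ((1 - e L (-c)) * \sum_(j < r) e L (- (c * j%:R))) (1 - e L (- (c * r%:R))).
Proof.
move=> hL; elim: r => [|r IH].
  by rewrite big_ord0 mulr0 mulr0 oppr0 e0 // subrr.
rewrite big_ord_recr /= mulrDr.
apply: (@eqm_trans _ _ (1 - e L (- (c * r%:R)) + (e L (- (c * r%:R)) - e L (-c) * e L (- (c * r%:R))))).
  by apply: eqmD => //; apply: eqm_eq; ring.
apply: (@eqm_trans _ _ (1 - e L (- (c * r%:R)) + (e L (- (c * r%:R)) - e L (- (c * r.+1%:R))))).
  apply: eqmD => //; apply: eqmB => //.
  apply: eqm_trans (e_add _ _ _) _; apply: eqm_eq; congr e.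
  by rewrite -natr1 mulrDr mulr1 opprD addrC.
by apply: eqm_eq; ring.
Qed.

Section Part2.
Variables (d k : nat) (x : rat).
Hypothesis hd : (2 <= d)%N.
Let L := k.+1.
Let L1 := (k + k.+1)%N.
Let Lb := L1.+1.
Let c : rat := (d ^ k.+1)%:R.
Let ee := e Lb.
Let Nf := ppart_num d k x.
Let Df := ppart_den d k.
Let D' : nat -> rat := fun j => Df (j + k.+1)%N.
Let V := P Lb (vfun c).
Let I := P Lb (fps_inv (vfun c)).
Let Q := \prod_(i < k) \sum_(j < d ^ (k - i)) ee (- ((d ^ i.+1 * j)%N%:R)).

Lemma d0 : (0 < d)%N. Proof. by apply: leq_trans hd. Qed.
Lemma c0 : c != 0. Proof. by rewrite pnatr_eq0 -lt0n expn_gt0 d0. Qed.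
Lemma Lb_eq : Lb = (L + k.+1)%N. Proof. by rewrite /Lb /L1 /L addSn. Qed.

Lemma stepA : polypart d k x = (P L Nf * P L (fps_inv D'))`_k.
Proof.
rewrite /polypart /laurent_coef.
have -> : (-1 + (k.+1)%:Z)%R = k%:Z by rewrite -addn1 PoszD addrCA addNr addr0.
exact: fps_mulE.
Qed.

Lemma stepB : eqm Lb (P Lb Nf) (ee x * \prod_(i < k.+1) (1 + ee (- (d ^ i)%N%:R))).
Proof.
apply: eqm_trans (P_mul _ _ _) _; apply: eqmM => //.
apply: eqm_trans (P_prod _ _ _ _) _ => //.
apply: eqm_prod => i _; by rewrite P_add P_one.
Qed.

Lemma stepC : eqm Lb (P Lb Df) (\prod_(i < k.+1) (1 - ee (- (d ^ i.+1)%N%:R))).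
Proof.
apply: eqm_trans (P_prod _ _ _ _) _ => //.
apply: eqm_prod => i _; by rewrite P_sub P_one.
Qed.

Lemma stepD : eqm Lb (P Lb Df) ('X ^+ k.+1 * \prod_(i < k.+1) P Lb (vfun (d ^ i.+1)%N%:R)).
Proof.
apply: eqm_trans stepC _.
have -> : ('X ^+ k.+1 : {poly rat}) = \prod_(i < k.+1) 'X by rewrite prodr_const card_ord.
rewrite -big_split /=.
apply: eqm_prod => i _; apply: eqm_sym; exact: V1.
Qed.

Lemma Df_low j : (j < k.+1)%N -> Df j = 0.
Proof.
move=> hj; have hjb : (j < Lb)%N by apply: leq_trans hj _; rewrite /Lb /L1; lia.
by rewrite -(coefP Lb Df j hjb) (stepD j hjb) coefXnM hj.
Qed.

Lemma stepE : eqm Lb ('X ^+ k.+1 * P L D') (P Lb Df).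
Proof.
move=> i hi; rewrite coefXnM [RHS]coefP //.
case: ifP => h; first by rewrite Df_low.
rewrite coefP; last by move: hi h; rewrite /Lb /L1 /L; lia.
by rewrite /D' subnK // leqNgt h.
Qed.

Lemma stepF : eqm Lb (P Lb Df * Q) ('X ^+ k.+1 * V ^+ k.+1).
Proof.
apply: (@eqm_trans _ _ ((\prod_(i < k.+1) (1 - ee (- (d ^ i.+1)%N%:R))) * Q)).
  by apply: eqmMr; exact: stepC.
rewrite big_ord_recr /= -mulrA mulrC -mulrA /Q -big_split /=.
apply: (@eqm_trans _ _ ((1 - ee (- c)) * \prod_(i < k) (1 - ee (- c)))).
  apply: eqmM; first exact: eqm_refl.
  apply: eqm_prod => i _; rewrite mulrC.
  have := tele Lb ((d ^ i.+1)%N%:R) (d ^ (k - i)) (ltn0Sn _).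
  have -> : ((d ^ i.+1)%N%:R * (d ^ (k - i))%N%:R : rat) = c.
    by rewrite -natrM -expnD /c; congr (_%:R); congr (expn _ _); move: (ltn_ord i); lia.
  move=> h; apply: eqm_trans _ h; apply: eqm_eq; congr (_ * _); apply: eq_bigr => j _.
  by rewrite natrM.
rewrite prodr_const card_ord -exprS -exprMn.
apply: eqmX; apply: eqm_sym; exact: V1.
Qed.

Lemma stepG : eqm L (P L D' * Q) (V ^+ k.+1).
Proof.
apply: (eqm_shift _ k.+1); rewrite -Lb_eq.
apply: (@eqm_trans _ _ (P Lb Df * Q)); last exact: stepF.
by rewrite mulrA; apply: eqmMr; exact: stepE.
Qed.

Lemma D'0 : D' 0%N != 0.
Proof.
have := stepG 0%N (ltn0Sn _); rewrite coef0M coef0X coefP // /V coefP //.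
rewrite /vfun expr1 opprK factS fact0 muln1 divr1 => h.
apply/negP => /eqP h0; move: h; rewrite h0 mul0r => /esym /eqP.
by rewrite expf_eq0 (negbTE c0) andbF.
Qed.

Lemma stepI : eqm L (P L (fps_inv D')) (Q * I ^+ k.+1).
Proof.
set iD := P L (fps_inv D').
have hVI : eqm L (V * I) 1 by apply: eqm_le (V2 c c0 L1); rewrite /L /L1; lia.
have hDi : eqm L (P L D' * iD) 1 by apply: P_inv; exact: D'0.
apply: (@eqm_trans _ _ (iD * (V * I) ^+ k.+1)).
  by rewrite -{1}(mulr1 iD); apply: eqmMl; rewrite -(expr1n _ k.+1); apply: eqmX; apply: eqm_sym.
rewrite exprMn mulrA.
apply: (@eqm_trans _ _ (iD * (P L D' * Q) * I ^+ k.+1)).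
  by apply: eqmMr; apply: eqmMl; apply: eqm_sym; exact: stepG.
apply: (@eqm_trans _ _ ((P L D' * iD) * Q * I ^+ k.+1)); first by apply: eqm_eq; ring.
rewrite -[X in eqm _ _ X]mul1r mulrA; apply: eqmMr; apply: eqmMr; exact: hDi.
Qed.

Lemma stepJ : polypart d k x =
  (ee x * (\prod_(i < k.+1) (1 + ee (- (d ^ i)%N%:R)) * Q) * I ^+ k.+1)`_k.
Proof.
rewrite stepA.
have hk : (k < L)%N by [].
have h1 : eqm L (P L Nf) (ee x * \prod_(i < k.+1) (1 + ee (- (d ^ i)%N%:R))).
  apply: eqm_trans (P_eqm L Lb Nf _) _; first by rewrite /Lb /L1 /L; lia.
  apply: eqm_le stepB; rewrite /Lb /L1 /L; lia.
rewrite mulrA -[_ * Q * _]mulrA.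
exact: (eqmM _ _ _ _ _ h1 stepI k hk).
Qed.

Lemma stepK : eqm Lb (ee x * (\prod_(i < k.+1) (1 + ee (- (d ^ i)%N%:R)) * Q))
  (\sum_(eps : {ffun 'I_k.+1 -> bool}) \sum_(j : {ffun 'I_k -> 'I_(d ^ k)} | jadm j)
     ee (x - (shiftS eps j)%:R)).
Proof.
pose f := fun s : nat => ee (- s%:R).
have e0' : f 0%N = 1 by rewrite /f oppr0 /ee e0.
have -> : \prod_(i < k.+1) (1 + ee (- (d ^ i)%N%:R)) * Q =
   \prod_(i < k.+1) (f 0%N + f (d ^ i)%N) *
   \prod_(i < k) (\sum_(j < d ^ (k - i)) f (d ^ i.+1 * j)%N) by rewrite e0'.
rewrite expand; last exact: d0.
rewrite big_distrr; apply: eqm_sum => eps _; rewrite big_distrr; apply: eqm_sum => j _.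
apply: (@eqm_trans _ _ (ee x * (ee (\sum_(i < k.+1) - (d ^ i * eps i)%N%:R) *
                               ee (\sum_(i < k) - (d ^ i.+1 * j i)%N%:R)))).
  by apply: eqmMl; apply: eqmM; apply: e_sum.
apply: (@eqm_trans _ _ (ee x * ee (\sum_(i < k.+1) - (d ^ i * eps i)%N%:R +
                               \sum_(i < k) - (d ^ i.+1 * j i)%N%:R))).
  by apply: eqmMl; apply: e_add.
apply: eqm_trans (e_add _ _ _) _; apply: eqm_eq; congr ee.
by rewrite /shiftS natrD !natr_sum !sumrN opprD [- _ + - _]addrC.
Qed.

Lemma part2 : polypart d k x =
    ((k`! * d ^ k.+1)%:R)^-1 *
    \sum_(eps : {ffun 'I_k.+1 -> bool})
      \sum_(j : {ffun 'I_k -> 'I_(d ^ k)} | jadm j)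
        prodterm d k x (shiftS eps j).
Proof.
rewrite stepJ.
have hk : (k < Lb)%N by rewrite /Lb /L1; lia.
rewrite (eqmMr _ _ _ _ stepK k hk) big_distrl coef_sum mulr_sumr.
apply: eq_bigr => eps _; rewrite big_distrl coef_sum mulr_sumr.
apply: eq_bigr => j _.
have := h_closed c c0 L1 k (x - (shiftS eps j)%:R).
rewrite /h /= => ->; last by rewrite /L1; lia.
by rewrite natrM.
Qed.
End Part2.


Lemma blk (f : nat -> {poly rat}) r N :
  \sum_(0 <= a < r * N) f a = \sum_(0 <= z < N) \sum_(0 <= j < r) f (r * z + j)%N.
Proof.
elim: N => [|N IH]; first by rewrite muln0 !big_geq.
rewrite big_nat_recr //= -IH mulnS addnC (big_cat_nat _ (n := (r * N)%N)) //=; last by apply: leq_addr.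
congr (_ + _).
rewrite -[in X in \sum_(X <= _ < _) _ = _](add0n (r * N)%N) big_addn addKn.
by apply: eq_bigr => j _; rewrite addnC.
Qed.

Lemma ext_sum L (f : nat -> {poly rat}) N1 N2 :
  (N1 <= N2)%N -> (forall a, (N1 <= a)%N -> eqm L (f a) 0) ->
  eqm L (\sum_(0 <= a < N1) f a) (\sum_(0 <= a < N2) f a).
Proof.
move=> h12 hf; rewrite [X in eqm _ _ X](big_cat_nat _ (n := N1)) //=.
rewrite -[X in eqm _ X _]addr0; apply: eqmD => //.
apply: (@eqm_trans _ _ (\sum_(N1 <= a < N2) (0 : {poly rat}))); first by rewrite big1 //; apply: eqm_refl.
apply: eqm_sym; rewrite big_nat_cond [X in eqm _ _ X]big_nat_cond.
apply: eqm_sum => a /andP [/andP [ha _] _]; exact: hf.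
Qed.

Lemma Xhigh L s : (L <= s)%N -> eqm L ('X ^+ s) 0.
Proof. by move=> h i hi; rewrite coefXn coef0; case: eqP => // e; move: hi h; rewrite e; lia. Qed.

Lemma rec_sol (u w U W : nat -> rat) Dd N : (0 < Dd)%N ->
  (forall m, (m < N)%N -> u m - (if (Dd <= m)%N then u (m - Dd)%N else 0) = w m) ->
  (forall m, (m < N)%N -> w m = if (Dd %| m)%N then W (m %/ Dd)%N else 0) ->
  U 0%N = W 0%N -> (forall q, U q.+1 - U q = W q.+1) ->
  forall m, (m < N)%N -> u m = if (Dd %| m)%N then U (m %/ Dd)%N else 0.
Proof.
move=> hD hu hw hU0 hUS; elim/ltn_ind => m IH hm.
have := hu m hm; rewrite hw //.
case: (leqP Dd m) => hDm.
  rewrite (IH (m - Dd)%N); [|by move: hDm hD hm; lia| by move: hDm hD hm; lia].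
  have -> : m = ((m - Dd) + Dd)%N by rewrite subnK.
  rewrite addnK dvdn_addl // divnDr // divnn hD addn1.
  case: ifP => _; last by rewrite subr0.
  by move=> h; rewrite -(hUS ((m - Dd) %/ Dd)%N) in h; move: h; lra.
rewrite subr0 => ->.
case: (posnP m) => [-> | hm0]; first by rewrite dvdn0 div0n hU0.
by rewrite gtnNdvd.
Qed.

Section Part1.
Variables (d k n : nat).
Hypothesis hd : (2 <= d)%N.
Hypothesis hn : (1 <= n)%N.
Let Lp := n.+1.
Let Dd := (d ^ k.+1)%N.
Let G := \prod_(i < k.+1) \sum_(a : 'I_n.+1)
   (if (a %% d == 0)%N || (a %% d == 1)%N then 'X^(d ^ i * a) else 0 : {poly rat}).
Let T := \sum_(0 <= z < n.+1) ('X^(Dd * z) : {poly rat}).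

Lemma d0' : (0 < d)%N. Proof. by apply: leq_trans hd. Qed.

Lemma step1 : ((pdd d k n)%:R : rat) = G`_n.
Proof.
rewrite /G bigA_distr_bigA coef_sum /pdd -sum1_card natr_sum big_mkcond /=.
apply: eq_bigr => x _.
rewrite prod_if prodrXr inE.
case: [forall _, _]; last by rewrite andbF coef0.
by rewrite andbT coefXn eq_sym; case: eqP.
Qed.

Lemma step2a (i : nat) : eqm Lp
  (\sum_(a : 'I_n.+1) (if (a %% d == 0)%N || (a %% d == 1)%N then 'X^(d ^ i * a) else 0 : {poly rat}))
  (('X^0 + 'X^(d ^ i)) * \sum_(0 <= y < n.+1) 'X^(d ^ i.+1 * y)).
Proof.
have hd0 := d0'.
rewrite -(big_mkord xpredT (fun a => if (a %% d == 0)%N || (a %% d == 1)%N then 'X^(d ^ i * a) else 0 : {poly rat})).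
apply: eqm_trans (ext_sum _ _ n.+1 (d * n.+1) _ _) _.
- by apply: leq_pmull.
- move=> a ha; case: ifP => _; last exact: eqm_refl.
  apply: Xhigh; apply: leq_trans ha _; apply: leq_pmull; by rewrite expn_gt0 hd0.
rewrite blk mulr_sumr; apply: eqm_eq; apply: eq_bigr => y _.
have hg : forall j, (j < d)%N -> ((d * y + j) %% d == 0)%N || ((d * y + j) %% d == 1)%N = (j == 0%N) || (j == 1%N).
  by move=> j hj; rewrite mulnC modnMDl modn_small.
rewrite big_ltn // hg // big_ltn // hg // big_nat_cond big1; last first.
  move=> j /andP [/andP [hj1 hj2] _]; rewrite hg //.
  by case: j hj1 {hj2} => [|[|j]].
rewrite addr0 /= mulrDl -!exprD; congr (_ + _); congr ('X^_); rewrite expnS; ring.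
Qed.

Lemma step2b (i : 'I_k) : eqm Lp (\sum_(0 <= y < n.+1) ('X^(d ^ i.+1 * y) : {poly rat}))
  ((\sum_(j < d ^ (k - i)) 'X^(d ^ i.+1 * j)) * T).
Proof.
have hd0 := d0'.
apply: eqm_trans (ext_sum _ _ n.+1 (d ^ (k - i) * n.+1) _ _) _.
- by apply: leq_pmull; rewrite expn_gt0 hd0.
- move=> a ha; apply: Xhigh; apply: leq_trans ha _; apply: leq_pmull; by rewrite expn_gt0 hd0.
rewrite blk /T mulr_sumr; apply: eqm_eq; apply: eq_bigr => z _.
rewrite mulrC mulr_sumr big_mkord; apply: eq_bigr => j _.
rewrite -exprD; congr ('X^_).
have -> : Dd = (d ^ i.+1 * d ^ (k - i))%N.
  by rewrite /Dd -expnD; congr (expn _ _); move: (ltn_ord i); lia.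
ring.
Qed.

Lemma step2 : eqm Lp G
  ((\prod_(i < k.+1) ('X^0 + 'X^(d ^ i)) *
    \prod_(i < k) (\sum_(j < d ^ (k - i)) 'X^(d ^ i.+1 * j))) * T ^+ k.+1).
Proof.
apply: (@eqm_trans _ _ (\prod_(i < k.+1) (('X^0 + 'X^(d ^ i)) *
            \sum_(0 <= y < n.+1) 'X^(d ^ i.+1 * y)))).
  by apply: eqm_prod => i _; apply: step2a.
rewrite big_split /= -mulrA; apply: eqmMl.
rewrite big_ord_recr /= exprSr mulrA; apply: eqmMr.
apply: (@eqm_trans _ _ (\prod_(i < k) ((\sum_(j < d ^ (k - i)) 'X^(d ^ i.+1 * j)) * T))).
  by apply: eqm_prod => i _; apply: step2b.
by rewrite big_split /= prodr_const card_ord; apply: eqm_refl.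
Qed.

Lemma Dd0 : (0 < Dd)%N. Proof. by rewrite /Dd expn_gt0 d0'. Qed.

Lemma Tinv : eqm Lp (T * (1 - 'X^Dd)) 1.
Proof.
have -> : T * (1 - 'X^Dd) = - \sum_(0 <= z < n.+1) ('X^(Dd * z.+1) - 'X^(Dd * z) : {poly rat}).
  rewrite /T mulrBr mulr1 big_distrl sumrB opprB /=; congr (_ - _).
  by apply: eq_bigr => z _; rewrite -exprD mulnS addnC.
rewrite (telescope_sumr (fun z => 'X^(Dd * z) : {poly rat})) // muln0 expr0 opprB.
rewrite -[X in eqm _ _ X]subr0; apply: eqmB; first exact: eqm_refl.
apply: Xhigh; apply: leq_pmull; exact: Dd0.
Qed.

Lemma coef_rec (p q : {poly rat}) : eqm Lp (p * (1 - 'X^Dd)) q ->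
  forall m, (m < Lp)%N -> p`_m - (if (Dd <= m)%N then p`_(m - Dd) else 0) = q`_m.
Proof.
move=> h m hm; rewrite -(h m hm) mulrBr mulr1 coefB coefMXn ltnNge.
by case: (Dd <= m)%N.
Qed.

Lemma Tpow K m : (m < n.+1)%N ->
  (T ^+ K.+1)`_m = if (Dd %| m)%N then ('C(m %/ Dd + K, K))%:R else 0.
Proof.
have hD := Dd0.
elim: K m => [|K IH] m hm.
  rewrite expr1.
  rewrite (rec_sol (fun m => T`_m) (fun m => (1 : {poly rat})`_m) (fun _ => 1) (fun q => (q == 0%N)%:R) Dd Lp hD _ _ _ _ m hm).
  - by case: ifP => //; rewrite bin0.
  - move=> m' hm'; apply: coef_rec => //; exact Tinv.
  - move=> m' _; rewrite coef1; case: (posnP m') => [-> | hm0]; first by rewrite dvdn0 div0n.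
    case: ifP => // hdv; have hq : (0 < m' %/ Dd)%N by rewrite divn_gt0 // dvdn_leq.
    by rewrite eqn0Ngt hq.
  - by [].
  - by move=> q; rewrite subrr.
rewrite (rec_sol (fun m => (T ^+ K.+2)`_m) (fun m => (T ^+ K.+1)`_m)
  (fun q => ('C(q + K.+1, K.+1))%:R) (fun q => ('C(q + K, K))%:R) Dd Lp hD _ _ _ _ m hm) //.
- move=> m' hm'; apply: coef_rec => //.
  rewrite exprS [T * _]mulrC -mulrA -[X in eqm _ _ X]mulr1; apply: eqmMl.
  exact Tinv.
- by rewrite !add0n !binn.
- move=> q; rewrite addSn binS natrD addrAC subrr add0r; congr (_%:R); congr binomial; lia.
Qed.

Lemma binprod q K : ('C(q + K, K) * K`!)%N = (\prod_(1 <= l < K.+1) (q + l))%N.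
Proof.
elim: K => [|K IH]; first by rewrite big_geq // bin0.
rewrite big_nat_recr //= -IH factS addnS.
have := mul_bin_diag (q + K).+1 K; rewrite /= => h.
rewrite mulnA (mulnC 'C(_, _) K.+1) -h; ring.
Qed.

Lemma term S : (S <= k * Dd + 1)%N ->
  ('X^S * T ^+ k.+1)`_n = if (S == n %[mod Dd])%N then ((k`!)%:R)^-1 * prodterm d k n%:R S else 0.
Proof.
move=> hS; have hD := Dd0.
rewrite coefXnM; case: (ltnP n S) => hnS.
  case: ifP => // hc.
  rewrite (eqn_mod_dvd _ (ltnW hnS)) in hc.
  set m := ((S - n) %/ Dd)%N.
  have hm : (S - n = m * Dd)%N by rewrite divnK.
  have hm1 : (0 < m)%N by rewrite lt0n; apply/eqP => h0; move: hm; rewrite h0 mul0n; lia.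
  have hmk : (m <= k)%N.
    rewrite -(leq_pmul2r hD) -hm.
    have : (S - n <= k * Dd)%N by lia.
    by [].
  have -> : prodterm d k n%:R S = 0.
    rewrite /prodterm.
    have -> : ((n%:R - S%:R) / (d ^ k.+1)%:R : rat) = - m%:R.
      rewrite -opprB -natrB ?(ltnW hnS) // hm natrM mulNr mulfK //.
      by rewrite pnatr_eq0 -lt0n.
    rewrite (big_cat_nat hm1 (leqW hmk)) /= [\prod_(m <= _ < _) _]big_ltn ?ltnS //.
    by rewrite addNr mul0r mulr0.
  by rewrite mulr0.
rewrite Tpow; last by rewrite ltnS leq_subr.
rewrite eq_sym (eqn_mod_dvd _ hnS).
case: ifP => // hdv.
set q := ((n - S) %/ Dd)%N.
have hq : (n - S = q * Dd)%N by rewrite divnK.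
rewrite /prodterm.
have -> : ((n%:R - S%:R) / (d ^ k.+1)%:R : rat) = q%:R.
  rewrite -natrB // hq natrM mulfK //.
  by rewrite pnatr_eq0 -lt0n.
have -> : \prod_(1 <= l < k.+1) (q%:R + l%:R : rat) = ((\prod_(1 <= l < k.+1) (q + l))%N)%:R.
  by rewrite natr_prod; apply: eq_bigr => l _; rewrite natrD.
rewrite -binprod natrM mulrC mulrK //; exact: fact_neq0.
Qed.

Lemma part1 : ((pdd d k n)%:R : rat) =
    ((k`!)%:R)^-1 *
    \sum_(eps : {ffun 'I_k.+1 -> bool})
      \sum_(j : {ffun 'I_k -> 'I_(d ^ k)} |
              jadm j && (shiftS eps j == n %[mod d ^ k.+1]))
        prodterm d k n%:R (shiftS eps j).
Proof.
rewrite step1 (step2 n (leqnn _)).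
rewrite (expand _ (fun s => 'X^s : {poly rat}) d k d0').
rewrite big_distrl coef_sum mulr_sumr; apply: eq_bigr => eps _.
rewrite big_distrl coef_sum big_mkcondr mulr_sumr /=; apply: eq_bigr => j hj.
rewrite !prodrXr -exprD addnC.
have := term (shiftS eps j) (shift_bound d k eps j d0' hj).
rewrite /shiftS => ->.
by case: ifP; rewrite ?mulr0.
Qed.
End Part1.


Theorem corollary2p4 (d n k : nat) :
  (2 <= d)%N -> (1 <= n)%N -> (k <= trunc_log d n)%N ->
  ((pdd d k n)%:R : rat) =
    ((k`!)%:R)^-1 *
    \sum_(eps : {ffun 'I_k.+1 -> bool})
      \sum_(j : {ffun 'I_k -> 'I_(d ^ k)} |
              jadm j && (shiftS eps j == n %[mod d ^ k.+1]))
        prodterm d k n%:R (shiftS eps j)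
  /\
  (forall x : rat,
    polypart d k x =
    ((k`! * d ^ k.+1)%:R)^-1 *
    \sum_(eps : {ffun 'I_k.+1 -> bool})
      \sum_(j : {ffun 'I_k -> 'I_(d ^ k)} | jadm j)
        prodterm d k x (shiftS eps j)).
Proof.
move=> hd hn _; split; first exact: (part1 d k n hd hn).
by move=> x; exact: (part2 d k x hd).
Qed.
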